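(* There is an absolute constant $c$ such that the following holds. Let $G$ be a simple graph given as a stream of $m$ distinct edges, with $W\ge m$ wedges and $T\ge1$ triangles. Fix $\beta\in(0,1)$, let $\beta'=\beta/5$, and let $\mathcal{R}_m=(r_1,\dots,r_s)$ be $s$ independent uniformly random edges of $G$ with $s\ge c\,m/(\beta^3\sqrt{T})$. Let $Y$ be the number of index pairs $i<j$ such that $\{r_i,r_j\}$ is a wedge, and $Z$ the number of index pairs $i<j$ such that $\{r_i,r_j\}$ is a future-closed wedge. Then $\mathbf{E}[Y]=s(s-1)W/m^2$ and with probability greater than $1-\beta'$, $|Y-\mathbf{E}[Y]|\le\beta'\mathbf{E}[Y]$. Moreover $\mathbf{E}[Z]=s(s-1)T/m^2$ and with probability greater than $1-\beta'$, $|Z-\mathbf{E}[Z]|\le(\beta' W/T)\mathbf{E}[Z]$.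
   Context: A wedge is a path of length 2, i.e. an unordered pair of distinct edges sharing exactly one vertex; $W$ is the number of wedges of $G$. Edges carry their stream positions $e_1,\dots,e_m$. For each triangle of $G$ with edges $e_i,e_j,e_k$, $i<j<k$, the wedge $\{e_i,e_j\}$ is called future-closed; there are exactly $T$ future-closed wedges. *)

(* Defs.v *)
From Stdlib Require Import Reals.
From mathcomp Require Import all_boot.
Set Implicit Arguments. Unset Strict Implicit. Unset Printing Implicit Defensive.

Section Defs.
Variable V : finType.

Definition simple_stream (es : seq {set V}) : bool :=
  uniq es && all (fun e : {set V} => #|e| == 2) es.

Definition edge_at (es : seq {set V}) (i : 'I_(size es)) : {set V} :=
  nth set0 es i.

Definition is_wedge (e f : {set V}) : bool := (e != f) && (#|e :&: f| == 1).

Definition is_tri_edges (e f g : {set V}) : bool :=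
  [&& e != f, f != g, e != g & #|e :|: f :|: g| == 3].

Definition num_wedges (es : seq {set V}) : nat :=
  #|[set p : 'I_(size es) * 'I_(size es) |
       (p.1 < p.2) && is_wedge (edge_at p.1) (edge_at p.2)]|.

Definition num_triangles (es : seq {set V}) : nat :=
  #|[set t : {set V} | (#|t| == 3) &&
       [forall e : {set V}, ((e \subset t) && (#|e| == 2)) ==> (e \in es)]]|.

Definition future_closed (es : seq {set V}) (i j : 'I_(size es)) : bool :=
  (i < j) && [exists k : 'I_(size es),
                (j < k) && is_tri_edges (edge_at i) (edge_at j) (edge_at k)].

Definition fc_pair (es : seq {set V}) (a b : 'I_(size es)) : bool :=
  future_closed a b || future_closed b a.

(* samples: s independent uniform edges, encoded by their stream positions *)
Definition sample (es : seq {set V}) (s : nat) := {ffun 'I_s -> 'I_(size es)}.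

Definition Ycount (es : seq {set V}) (s : nat) (r : sample es s) : nat :=
  #|[set p : 'I_s * 'I_s |
       (p.1 < p.2) && is_wedge (edge_at (r p.1)) (edge_at (r p.2))]|.

Definition Zcount (es : seq {set V}) (s : nat) (r : sample es s) : nat :=
  #|[set p : 'I_s * 'I_s | (p.1 < p.2) && fc_pair (r p.1) (r p.2)]|.

Definition expect (es : seq {set V}) (s : nat) (X : sample es s -> nat) : R :=
  Rdiv (INR (\sum_(r : sample es s) X r)) (INR #|{: sample es s}|).

Definition prob (es : seq {set V}) (s : nat) (P : pred (sample es s)) : R :=
  Rdiv (INR #|[set r : sample es s | P r]|) (INR #|{: sample es s}|).

End Defs.

Definition Rleb (x y : R) : bool := if Rle_dec x y then true else false.

(* Main.v *)
Require Import Defs.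
From Stdlib Require Import Reals Lra Psatz Ring ArithRing.
From mathcomp Require Import all_boot zify.
Set Implicit Arguments. Unset Strict Implicit. Unset Printing Implicit Defensive.
Set Implicit Arguments. Unset Strict Implicit. Unset Printing Implicit Defensive.

Section Gen.
Variables (S N : nat).
Local Notation Om := {ffun 'I_S -> 'I_N}.

Definition ind (r : Om) (cs : seq ('I_S * 'I_N)) : nat :=
  \prod_(c <- cs) (r c.1 == c.2).

Definition Fc (cs : seq ('I_S * 'I_N)) (x : 'I_S) (z : 'I_N) : nat :=
  \prod_(c <- cs) (if x == c.1 then (z == c.2 : nat) else 1).

Lemma Fc_notin cs x : x \notin map fst cs ->
  (forall z, Fc cs x z = 1) /\ count (fun c => x == c.1) cs = 0.
Proof.
elim: cs => [|c cs IH] /=; first by rewrite /Fc; split=> // z; rewrite big_nil.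
rewrite in_cons negb_or => /andP[hc hn]; have [h1 h2] := IH hn.
rewrite (negbTE hc) h2; split=> // z.
by rewrite /Fc big_cons (negbTE hc) mul1n; apply: h1.
Qed.

Lemma Fc_x cs x : uniq (map fst cs) ->
  (\sum_z Fc cs x z) * N ^ count (fun c => x == c.1) cs = N.
Proof.
elim: cs => [|c cs IH] /=.
  by move=> _; rewrite expn0 muln1 /Fc (eq_bigr (fun _ => 1)) ?sum_nat_const ?card_ord ?muln1 // => z _; rewrite big_nil.
move=> /andP[hn hu].
case: (eqVneq x c.1) => [->|hx].
  have [h1 h2] := Fc_notin hn.
  rewrite h2 addn0 expn1.
  rewrite (eq_bigr (fun z => (z == c.2 : nat))); last first.
    by move=> z _; rewrite /Fc big_cons eqxx -/(Fc cs c.1 z) h1 muln1.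
  rewrite (bigD1 c.2) //= eqxx big1 ?addn0 ?mul1n // => z /negbTE -> //.
rewrite add0n; apply: etrans (IH hu); congr (_ * _); apply: eq_bigr => z _.
by rewrite /Fc big_cons (negbTE hx) mul1n.
Qed.

Lemma ind_prod r cs : ind r cs = \prod_x Fc cs x (r x).
Proof.
rewrite /ind /Fc exchange_big /=; apply: eq_bigr => c _.
rewrite -big_mkcond /=.
rewrite (eq_bigr (fun x => (r c.1 == c.2 : nat))); last by move=> x /eqP ->.
by rewrite big_pred1_eq.
Qed.

Lemma sum_count (cs : seq ('I_S * 'I_N)) : \sum_(x : 'I_S) count (fun c => x == c.1) cs = size cs.
Proof.
elim: cs => [|c cs IH] /=; first by rewrite big1.
rewrite big_split /= IH (bigD1 c.1) //= eqxx big1 ?addn0 ?add1n // => y /negbTE -> //.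
Qed.

Lemma count_cs cs : uniq (map fst cs) ->
  (\sum_(r : Om) ind r cs) * N ^ size cs = N ^ S.
Proof.
move=> hu.
rewrite (eq_bigr (fun r : Om => \prod_x Fc cs x (r x))); last by move=> r _; rewrite ind_prod.
rewrite -(@bigA_distr_bigA nat 0 1 muln addn) /=.
rewrite -(sum_count cs) expn_sum -big_split /=.
rewrite (eq_bigr (fun _ => N)); last by move=> x _; apply: Fc_x.
by rewrite prod_nat_const card_ord.
Qed.

End Gen.
Set Implicit Arguments. Unset Strict Implicit. Unset Printing Implicit Defensive.

Section Mom.
Variables (S N : nat) (w : 'I_N -> 'I_N -> bool).
Hypothesis wsym : forall a b, w a b = w b a.
Hypothesis wirr : forall a, w a a = false.
Local Notation Om := {ffun 'I_S -> 'I_N}.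

Definition Aw := \sum_a \sum_b (w a b : nat).
Definition Dw := \sum_a (\sum_b (w a b : nat)) ^ 2.

Lemma gen_sum (J : finType) (cs : J -> seq ('I_S * 'I_N)) (G : J -> nat) k :
  (forall j, uniq (map fst (cs j))) -> (forall j, size (cs j) = k) ->
  (\sum_(r : Om) \sum_j ind r (cs j) * G j) * N ^ k = N ^ S * \sum_j G j.
Proof.
move=> hu hs; rewrite exchange_big big_distrl big_distrr /=; apply: eq_bigr => j _.
rewrite -big_distrl /= mulnAC -(hs j) count_cs // mulnC.
Qed.

Lemma nb (b : bool) : (b : nat) = 0 -> b = false. Proof. by case: b. Qed.

Lemma L2 i j : i != j ->
  (\sum_(r : Om) (w (r i) (r j) : nat)) * N ^ 2 = N ^ S * Aw.
Proof.
move=> hij.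
rewrite (eq_bigr (fun r : Om => \sum_(p : 'I_N * 'I_N) ind r [:: (i, p.1); (j, p.2)] * w p.1 p.2)).
  rewrite (@gen_sum _ (fun p => [:: (i, p.1); (j, p.2)]) (fun p => (w p.1 p.2 : nat)) 2) //.
    by rewrite /Aw pair_bigA.
  by move=> p /=; rewrite inE hij.
move=> r _; rewrite (bigD1 (r i, r j)) //= /ind !big_cons big_nil /= !eqxx /= big1 ?muln1 ?mul1n ?addn0 //.
move=> [a b] /=; rewrite xpair_eqE => h.
by rewrite /ind !big_cons big_nil /=; case: (eqVneq (r i) a) h => _; case: (eqVneq (r j) b) => _; rewrite //= ?muln0 ?mul0n.
Qed.

Lemma L3 x y z : x != y -> x != z -> y != z ->
  (\sum_(r : Om) (w (r x) (r y) : nat) * w (r x) (r z)) * N ^ 3 = N ^ S * Dw.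
Proof.
move=> hxy hxz hyz.
rewrite (eq_bigr (fun r : Om => \sum_(p : 'I_N * ('I_N * 'I_N))
   ind r [:: (x, p.1); (y, p.2.1); (z, p.2.2)] * (w p.1 p.2.1 * w p.1 p.2.2))).
  rewrite (@gen_sum _ (fun p => [:: (x, p.1); (y, p.2.1); (z, p.2.2)])
       (fun p => (w p.1 p.2.1 : nat) * w p.1 p.2.2) 3) //.
    rewrite /Dw -(pair_bigA _ (fun a q => (w a q.1 : nat) * w a q.2)) /=.
    congr (_ * _); apply: eq_bigr => a _.
    by rewrite -(pair_bigA _ (fun b c => (w a b : nat) * w a c)) -big_distrlr /= expnS expn1.
  by move=> p /=; rewrite !inE negb_or hxy hxz hyz.
move=> r _; rewrite (bigD1 (r x, (r y, r z))) //= /ind !big_cons big_nil /= !eqxx /= big1 ?muln1 ?mul1n ?addn0 //.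
move=> [a [b c]] /=; rewrite !xpair_eqE => h.
rewrite /ind !big_cons big_nil /=; case: (eqVneq (r x) a) h => _; case: (eqVneq (r y) b) => _;
  case: (eqVneq (r z) c) => _; rewrite //= ?muln0 ?mul0n.
Qed.

Lemma L4 i j k l : i != j -> i != k -> i != l -> j != k -> j != l -> k != l ->
  (\sum_(r : Om) (w (r i) (r j) : nat) * w (r k) (r l)) * N ^ 4 = N ^ S * (Aw * Aw).
Proof.
move=> h1 h2 h3 h4 h5 h6.
rewrite (eq_bigr (fun r : Om => \sum_(p : ('I_N * 'I_N) * ('I_N * 'I_N))
   ind r [:: (i, p.1.1); (j, p.1.2); (k, p.2.1); (l, p.2.2)] * (w p.1.1 p.1.2 * w p.2.1 p.2.2))).
  rewrite (@gen_sum _ (fun p => [:: (i, p.1.1); (j, p.1.2); (k, p.2.1); (l, p.2.2)])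
       (fun p => (w p.1.1 p.1.2 : nat) * w p.2.1 p.2.2) 4) //.
    rewrite -(pair_bigA _ (fun p q => (w p.1 p.2 : nat) * w q.1 q.2)) /=.
    by rewrite -big_distrlr /= /Aw pair_bigA.
  by move=> p /=; rewrite !inE !negb_or h1 h2 h3 h4 h5 h6.
move=> r _; rewrite (bigD1 ((r i, r j), (r k, r l))) //= /ind !big_cons big_nil /= !eqxx /= big1 ?muln1 ?mul1n ?addn0 //.
move=> [[a b] [c d]] /=; rewrite !xpair_eqE => h.
rewrite /ind !big_cons big_nil /=; case: (eqVneq (r i) a) h => _; case: (eqVneq (r j) b) => _;
  case: (eqVneq (r k) c) => _; case: (eqVneq (r l) d) => _; rewrite //= ?muln0 ?mul0n.
Qed.

End Mom.
Set Implicit Arguments. Unset Strict Implicit. Unset Printing Implicit Defensive.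

Lemma sum_eq1 (T : finType) (x : T) : \sum_(y : T) ((x == y) : nat) = 1.
Proof. by rewrite (bigD1 x) //= eqxx big1 // => y /negbTE; rewrite eq_sym => ->. Qed.

Lemma H1 a b c : a <= a + b + c. Proof. lia. Qed.
Lemma H2 a P Y c : 0 < P -> Y <= a + P * Y + c.
Proof. move=> hP; have := leq_pmull Y hP; lia. Qed.
Lemma H3 a P Y c : 0 < P -> Y <= a + c + P * Y.
Proof. move=> hP; have := leq_pmull Y hP; lia. Qed.

Lemma bb (b : bool) : (b : nat) * b = b. Proof. by case: b. Qed.

Section Mom2.
Variables (S N : nat) (w : 'I_N -> 'I_N -> bool).
Hypothesis wsym : forall a b, w a b = w b a.
Hypothesis wirr : forall a, w a a = false.
Local Notation Om := {ffun 'I_S -> 'I_N}.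
Local Notation Aw := (Aw w).
Local Notation Dw := (Dw w).

Definition X2 (r : Om) : nat := \sum_(p : 'I_S * 'I_S) (w (r p.1) (r p.2) : nat).

Lemma cnt_neq (i : 'I_S) : \sum_j ((i != j) : nat) = S.-1.
Proof.
rewrite (bigD1 i) //= eqxx add0n (eq_bigr (fun _ => 1)) ?sum1_card ?cardC1 ?card_ord //.
by move=> j; rewrite eq_sym => ->.
Qed.

Lemma X2_mean : (\sum_(r : Om) X2 r) * N ^ 2 = N ^ S * (S * S.-1 * Aw).
Proof.
rewrite /X2 exchange_big big_distrl /=.
rewrite (eq_bigr (fun p : 'I_S * 'I_S => ((p.1 != p.2) : nat) * (N ^ S * Aw))); last first.
  move=> [i j] _ /=; have [<-|hij] := eqVneq i j.
    by rewrite mul0n big1 // => r _; rewrite wirr.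
  by rewrite mul1n L2.
rewrite -big_distrl /= -(pair_bigA _ (fun i j => ((i != j) : nat))) /=.
rewrite (eq_bigr (fun _ => S.-1)) ?sum_nat_const ?card_ord; last by move=> i _; apply: cnt_neq.
by rewrite mulnCA mulnA.
Qed.

Definition Bf (p q : 'I_S * 'I_S) : nat :=
  Aw * Aw + ((p == q) + (p == (q.2, q.1))) * (Aw * N ^ 2)
  + ((q.1 == p.1) + (q.1 == p.2) + (q.2 == p.1) + (q.2 == p.2)) * (Dw * N).

Lemma pairb i j k l :
  (\sum_(r : Om) (w (r i) (r j) : nat) * w (r k) (r l)) * N ^ 4 <= N ^ S * Bf (i, j) (k, l).
Proof.
rewrite /Bf /=.
have [<-|hij] := eqVneq i j.
  by rewrite big1 // => r _; rewrite wirr.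
have [<-|hkl] := eqVneq k l.
  by rewrite big1 // => r _; rewrite wirr muln0.
have L3' x y z : x != y -> x != z -> y != z ->
   (\sum_(r : Om) (w (r x) (r y) : nat) * w (r x) (r z)) * N ^ 4 = N ^ S * (Dw * N).
  by move=> h1 h2 h3; rewrite (expnS N 3) mulnCA (L3 w h1 h2 h3) mulnCA [Dw * N]mulnC.
have L2' : (\sum_(r : Om) (w (r i) (r j) : nat)) * N ^ 4 = N ^ S * (Aw * N ^ 2).
  by rewrite (_ : 4 = 2 + 2) // expnD mulnA L2 // mulnA.
have [eki|hki] := eqVneq k i.
  subst k; have [elj|hlj] := eqVneq l j.
    subst l; rewrite (eq_bigr (fun r : Om => (w (r i) (r j) : nat))); last by move=> r _; rewrite bb.
    by rewrite L2' leq_mul2l; apply/orP; right; apply: H2; rewrite ?eqxx /=; lia.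
  rewrite L3'; try by rewrite // eq_sym.
  rewrite leq_mul2l; apply/orP; right.
  by apply: H3; rewrite ?eqxx /=; lia.
have [ekj|hkj] := eqVneq k j.
  subst k; have [eli|hli] := eqVneq l i.
    subst l; rewrite (eq_bigr (fun r : Om => (w (r i) (r j) : nat))); last by move=> r _; rewrite (wsym (r j)) bb.
    by rewrite L2' leq_mul2l; apply/orP; right; apply: H2; rewrite ?eqxx /=; lia.
  rewrite (eq_bigr (fun r : Om => (w (r j) (r i) : nat) * w (r j) (r l))); last by move=> r _; rewrite wsym.
  rewrite L3'; try by rewrite // eq_sym.
  rewrite leq_mul2l; apply/orP; right.
  by apply: H3; rewrite ?eqxx /=; lia.
have [eli|hli] := eqVneq l i.
  subst l.
  rewrite (eq_bigr (fun r : Om => (w (r i) (r j) : nat) * w (r i) (r k))); last by move=> r _; rewrite (wsym (r k)).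
  rewrite L3'; try by rewrite // eq_sym.
  rewrite leq_mul2l; apply/orP; right.
  by apply: H3; rewrite ?eqxx /=; lia.
have [elj|hlj] := eqVneq l j.
  subst l.
  rewrite (eq_bigr (fun r : Om => (w (r j) (r i) : nat) * w (r j) (r k))); last by move=> r _; rewrite (wsym (r k)) wsym.
  rewrite L3'; try by rewrite // eq_sym.
  rewrite leq_mul2l; apply/orP; right.
  by apply: H3; rewrite ?eqxx /=; lia.
rewrite (L4 w hij _ _ _ _ hkl); try by rewrite eq_sym.
by rewrite leq_mul2l; apply/orP; right; apply: H1.
Qed.

Lemma sq1 (x : 'I_S) : \sum_(q : 'I_S * 'I_S) ((q.1 == x) : nat) = S.
Proof.
rewrite -(pair_bigA _ (fun a b => ((a == x) : nat))) /=.
rewrite (eq_bigr (fun a : 'I_S => S * (a == x))); last by move=> a _; rewrite sum_nat_const card_ord mulnC.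
by rewrite -big_distrr /= (eq_bigr (fun a : 'I_S => ((x == a) : nat))) ?sum_eq1 ?muln1 // => a _; rewrite eq_sym.
Qed.

Lemma sq2 (x : 'I_S) : \sum_(q : 'I_S * 'I_S) ((q.2 == x) : nat) = S.
Proof.
rewrite -(pair_bigA _ (fun a b => ((b == x) : nat))) /=.
rewrite (eq_bigr (fun a : 'I_S => 1)); first by rewrite sum_nat_const card_ord muln1.
by move=> a _; rewrite (eq_bigr (fun b : 'I_S => ((x == b) : nat))) ?sum_eq1 // => b _; rewrite eq_sym.
Qed.

Lemma sumBf : \sum_p \sum_q Bf p q = S ^ 4 * (Aw * Aw) + 2 * S ^ 2 * (Aw * N ^ 2) + 4 * S ^ 3 * (Dw * N).
Proof.
rewrite /Bf.
under eq_bigr do rewrite !big_split /= -!big_distrl /= !big_split /=.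
have e1 (p : 'I_S * 'I_S) : \sum_q ((p == (q.2, q.1)) : nat) = 1.
  rewrite -(sum_eq1 (p.2, p.1)); apply: eq_bigr => -[a b] _; case: p => c d /=.
  by rewrite !xpair_eqE andbC.
under eq_bigr do rewrite sum_eq1 e1 !sq1 !sq2.
rewrite !big_split /= !sum_nat_const !card_prod !card_ord.
rewrite !expnS !expn0 !muln1 !muln0 !addn0 -!multE -!plusE; ring.
Qed.

Lemma X2_var : (\sum_(r : Om) X2 r ^ 2) * N ^ 4 <=
  N ^ S * (S ^ 4 * (Aw * Aw) + 2 * S ^ 2 * (Aw * N ^ 2) + 4 * S ^ 3 * (Dw * N)).
Proof.
rewrite -sumBf big_distrr /=.
have -> : \sum_(r : Om) X2 r ^ 2 = \sum_(p : 'I_S * 'I_S) \sum_(q : 'I_S * 'I_S)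
     \sum_(r : Om) (w (r p.1) (r p.2) : nat) * w (r q.1) (r q.2).
  rewrite (eq_bigr (fun r : Om => \sum_(p : 'I_S * 'I_S) \sum_(q : 'I_S * 'I_S)
     (w (r p.1) (r p.2) : nat) * w (r q.1) (r q.2))); last first.
    by move=> r _; rewrite /X2 expnS expn1 big_distrlr.
  rewrite exchange_big; apply: eq_bigr => p _; by rewrite exchange_big.
rewrite big_distrl /=; apply: leq_sum => p _.
rewrite big_distrl big_distrr /=; apply: leq_sum => q _.
by case: p => i j; case: q => k l; apply: pairb.
Qed.

End Mom2.
Set Implicit Arguments. Unset Strict Implicit. Unset Printing Implicit Defensive.

Lemma sum_bool_card (T : finType) (b : pred T) : \sum_(x : T) (b x : nat) = #|[set x | b x]|.
Proof.
rewrite cardsE -sum1_card [RHS]big_mkcond /=; apply: eq_bigr => x _.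
by rewrite unfold_in; case: (b x).
Qed.

Lemma pairs2 n (f : 'I_n -> 'I_n -> bool) :
  (forall a b, f a b = f b a) -> (forall a, f a a = false) ->
  2 * #|[set p : 'I_n * 'I_n | (p.1 < p.2) && f p.1 p.2]| = \sum_(p : 'I_n * 'I_n) (f p.1 p.2 : nat).
Proof.
move=> fs fi.
rewrite (eq_bigr (fun p : 'I_n * 'I_n => (((p.1 < p.2) && f p.1 p.2) : nat) + (((p.2 < p.1) && f p.2 p.1) : nat))); last first.
  move=> [a b] _ /=; rewrite (fs b a); case: (ltngtP a b) => h /=; rewrite ?addn0 //.
  by rewrite (val_inj h) fi.
rewrite big_split /=.
have sw : injective (fun p : 'I_n * 'I_n => (p.2, p.1)) by apply: (can_inj (g := fun p : 'I_n * 'I_n => (p.2, p.1))) => -[].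
rewrite [X in _ = _ + X](reindex_inj sw) /=.
by rewrite !sum_bool_card mul2n -addnn.
Qed.
Set Implicit Arguments. Unset Strict Implicit. Unset Printing Implicit Defensive.

Section SetFacts.
Variable V : finType.
Implicit Types e f g t : {set V}.

Lemma caple1 e f : #|e| = 2 -> #|f| = 2 -> e != f -> #|e :&: f| <= 1.
Proof.
move=> he hf nef; rewrite leqNgt; apply/negP => h2.
have h1 : e :&: f = e.
  apply/eqP; rewrite eqEcard subsetIl he; exact: h2.
have h3 : e :&: f = f.
  apply/eqP; rewrite eqEcard subsetIr hf; exact: h2.
by move/eqP: nef; apply; rewrite -h1 h3.
Qed.

Lemma union2 e f : #|e| = 2 -> #|f| = 2 -> e != f -> 3 <= #|e :|: f|.
Proof. move=> he hf nef; have := cardsUI e f; have := caple1 he hf nef; lia. Qed.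

Lemma sub_eq3 (A : {set V}) t : A \subset t -> #|t| = 3 -> 3 <= #|A| -> A = t.
Proof. by move=> hs ht hA; apply/eqP; rewrite eqEcard hs ht. Qed.

Lemma share_wedge e f u : #|e| = 2 -> #|f| = 2 -> e != f -> u \in e -> u \in f -> is_wedge e f.
Proof.
move=> he hf nef ue uf; rewrite /is_wedge nef /= eqn_leq caple1 //=.
by rewrite card_gt0; apply/set0Pn; exists u; rewrite inE ue uf.
Qed.

Lemma card3 e f g : e != f -> f != g -> e != g -> #|[set e; f; g]| = 3.
Proof.
move=> h1 h2 h3; rewrite setUC cardsU1 cards2 h1 !inE negb_or.
by rewrite (eq_sym g e) (eq_sym g f) h2 h3.
Qed.

End SetFacts.

Section Stream.
Variable V : finType.
Variable es : seq {set V}.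
Hypothesis hs : simple_stream es.
Local Notation N := (size es).
Local Notation ea := (@edge_at V es).

Lemma edge2 (a : 'I_N) : #|ea a| = 2.
Proof.
move: hs => /andP[_ /allP h]; apply/eqP; apply: h; exact: mem_nth.
Qed.

Lemma einj : injective ea.
Proof.
move=> a b h; apply: val_inj; apply/eqP; move: hs => /andP[hu _].
by rewrite -(nth_uniq set0 (ltn_ord a) (ltn_ord b) hu); apply/eqP.
Qed.

Lemma eneq (a b : 'I_N) : a != b -> ea a != ea b.
Proof. by apply: contra => /eqP /einj ->. Qed.

Definition wY (a b : 'I_N) : bool := is_wedge (ea a) (ea b).
Definition wZ (a b : 'I_N) : bool := fc_pair a b.

Lemma wY_sym a b : wY a b = wY b a.
Proof. by rewrite /wY /is_wedge eq_sym setIC. Qed.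
Lemma wY_irr a : wY a a = false.
Proof. by rewrite /wY /is_wedge eqxx. Qed.
Lemma wZ_sym a b : wZ a b = wZ b a.
Proof. by rewrite /wZ /fc_pair orbC. Qed.
Lemma wZ_irr a : wZ a a = false.
Proof. by rewrite /wZ /fc_pair /future_closed ltnn. Qed.

Lemma fc_core (a b : 'I_N) : future_closed a b ->
  exists k : 'I_N, [/\ a < b, b < k, #|ea a :|: ea b| = 3, ea k \subset ea a :|: ea b
     & [/\ ea a != ea b, ea b != ea k & ea a != ea k]].
Proof.
case/andP=> hab /existsP[k /andP[hbk /and4P[h1 h2 h3 /eqP h4]]].
exists k; split=> //.
- have := union2 (edge2 a) (edge2 b) h1.
  have : #|ea a :|: ea b| <= 3 by rewrite -h4 subset_leq_card // subsetUl.
  lia.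
- have e : ea a :|: ea b = ea a :|: ea b :|: ea k.
    apply: sub_eq3; [exact: subsetUl | exact: h4 | exact: union2 (edge2 a) (edge2 b) h1].
  by rewrite e subsetUr.
Qed.

Lemma fc_wY (a b : 'I_N) : future_closed a b -> wY a b.
Proof.
case/fc_core=> k [_ _ h3 _ [h1 _ _]].
rewrite /wY /is_wedge h1 /=; have := cardsUI (ea a) (ea b); rewrite h3 !edge2; lia.
Qed.

Lemma wZ_wY a b : wZ a b -> wY a b.
Proof. by case/orP => /fc_wY //; rewrite wY_sym. Qed.

End Stream.

Section Tri.
Variable V : finType.
Variable es : seq {set V}.
Hypothesis hs : simple_stream es.
Local Notation N := (size es).
Local Notation ea := (@edge_at V es).

Lemma fc_edges (a b k : 'I_N) : #|ea a :|: ea b| = 3 -> ea k \subset ea a :|: ea b ->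
  ea a != ea b -> ea b != ea k -> ea a != ea k ->
  forall e : {set V}, (e \subset ea a :|: ea b) && (#|e| == 2) = (e \in [set ea a; ea b; ea k]).
Proof.
move=> h3 hk n1 n2 n3 e.
have E : [set e0 : {set V} | e0 \subset ea a :|: ea b & #|e0| == 2] = [set ea a; ea b; ea k].
  apply/eqP; rewrite eq_sym eqEcard card3 // cards_draws h3 /=.
  rewrite andbT; apply/subsetP => x; rewrite !inE => /orP[/orP[]|] /eqP ->;
   rewrite ?subsetUl ?subsetUr ?hk ?(edge2 hs) //.
by rewrite -E inE.
Qed.

Lemma fc_pos (a b : 'I_N) : future_closed a b -> exists k : 'I_N, a < b /\ b < k /\
  forall i : 'I_N, (ea i \subset ea a :|: ea b) = (i \in [set a; b; k]).
Proof.
case/(fc_core hs)=> k [h1 h2 h3 h4 [n1 n2 n3]]; exists k; do 2 split => //.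
move=> i; have := fc_edges h3 h4 n1 n2 n3 (ea i); rewrite (edge2 hs) eqxx andbT => ->.
by rewrite !inE !(inj_eq (einj hs)).
Qed.

Definition FCs := [set p : 'I_N * 'I_N | future_closed p.1 p.2].
Definition TRs := [set t : {set V} | (#|t| == 3) &&
       [forall e : {set V}, ((e \subset t) && (#|e| == 2)) ==> (e \in es)]].
Definition fU (p : 'I_N * 'I_N) := ea p.1 :|: ea p.2.

Lemma fU_inj : {in FCs &, injective fU}.
Proof.
move=> [p1 p2] [q1 q2]; rewrite !inE /fU /= => hp hq e.
have [k [h1 [h2 hk]]] := fc_pos hp; have [k' [h1' [h2' hk']]] := fc_pos hq.
have m i : (i \in [set p1; p2; k]) = (i \in [set q1; q2; k']) by rewrite -hk -hk' e.
have b1 : p1 \in [set q1; q2; k'] by rewrite -m !inE eqxx.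
have b2 : p2 \in [set q1; q2; k'] by rewrite -m !inE eqxx ?orbT.
have b3 : q1 \in [set p1; p2; k] by rewrite m !inE eqxx.
have b4 : q2 \in [set p1; p2; k] by rewrite m !inE eqxx ?orbT.
move: b1 b2 b3 b4; rewrite !inE -!(inj_eq (@ord_inj N)) /= => b1 b2 b3 b4.
have e1 : p1 = q1 by apply: ord_inj; lia.
have e2 : p2 = q2 by apply: ord_inj; lia.
by rewrite e1 e2.
Qed.

Lemma fU_im : [set fU p | p in FCs] = TRs.
Proof.
apply/setP => t; apply/imsetP/idP.
  move=> [[a b]]; rewrite inE /fU /= => hab ->.
  case/(fc_core hs): (hab) => k [h1 h2 h3 h4 [n1 n2 n3]].
  rewrite inE h3 eqxx /=; apply/forallP => e; apply/implyP => he.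
  move: he; rewrite (fc_edges h3 h4 n1 n2 n3) !inE => /orP[/orP[]|] /eqP ->; exact: mem_nth.
rewrite inE => /andP[/eqP t3 /forallP hall].
set P := [set i : 'I_N | ea i \subset t].
have hP : #|P| = 3.
  have E : [set ea i | i in P] = [set e : {set V} | e \subset t & #|e| == 2].
    apply/setP => e; apply/imsetP/idP.
      by move=> [i]; rewrite /P inE => hi ->; rewrite inE hi (edge2 hs) eqxx.
    rewrite inE => he; have := implyP (hall e) he => ein.
    have hi : index e es < N by rewrite index_mem.
    exists (Ordinal hi); last by rewrite /edge_at /= nth_index.
    by rewrite /P inE /edge_at /= nth_index //; case/andP: he.
  rewrite -(card_in_imset (f := ea)); last by move=> x y _ _; apply: einj.
  by rewrite E cards_draws t3.
have [x [y [z [[hxy hxz hyz] [hx hy hz]]]]] : exists x y z : 'I_N,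
   [/\ x != y, x != z & y != z] /\ [/\ x \in P, y \in P & z \in P].
  have hu := enum_uniq P.
  move: hP; rewrite cardE; case E: (enum P) hu => [|x [|y [|z [|u l]]]] //= hu _.
  exists x, y, z; have mP v : v \in [:: x; y; z] -> v \in P by rewrite -E mem_enum.
  split; last by split; apply: mP; rewrite !inE eqxx ?orbT.
  by move: hu; rewrite !inE !negb_or => /and3P[/andP[-> ->] -> _].
have [a [b [k [hab hbk [ha hb hk]]]]] : exists a b k : 'I_N, [/\ a < b, b < k & [/\ a \in P, b \in P & k \in P]].
  have o1 : (x < y) || (y < x) by rewrite -neq_ltn.
  have o2 : (x < z) || (z < x) by rewrite -neq_ltn.
  have o3 : (y < z) || (z < y) by rewrite -neq_ltn.
  case/orP: o1 => o1; case/orP: o2 => o2; case/orP: o3 => o3;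
  first [ (exists x, y, z; split; [lia | lia | by split])
        | (exists x, z, y; split; [lia | lia | by split])
        | (exists y, x, z; split; [lia | lia | by split])
        | (exists y, z, x; split; [lia | lia | by split])
        | (exists z, x, y; split; [lia | lia | by split])
        | (exists z, y, x; split; [lia | lia | by split])
        | lia ].
move: ha hb hk; rewrite /P !inE => ha hb hk.
have nab : a != b by rewrite -(inj_eq (@ord_inj N)) neq_ltn hab.
have nbk : b != k by rewrite -(inj_eq (@ord_inj N)) neq_ltn hbk.
have nak : a != k by rewrite -(inj_eq (@ord_inj N)) neq_ltn (ltn_trans hab hbk).
have eU : ea a :|: ea b = t.
  apply: sub_eq3 => //; first by rewrite subUset ha hb.
  by apply: union2; rewrite ?(edge2 hs) ?(eneq hs).
exists (a, b); last by rewrite /fU.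
rewrite inE /future_closed /= hab; apply/existsP; exists k; rewrite hbk /is_tri_edges /=.
rewrite !(eneq hs) // eU (setUidPl hk) t3 eqxx.
by [].
Qed.

End Tri.


Lemma leq_sum_in (T : finType) (B : pred T) (F : T -> nat) : \sum_(i in B) F i <= \sum_i F i.
Proof. by rewrite big_mkcond; apply: leq_sum => i _; case: (i \in B). Qed.

Section Counts.
Variable V : finType.
Variable es : seq {set V}.
Hypothesis hs : simple_stream es.
Local Notation N := (size es).
Local Notation ea := (@edge_at V es).

Lemma tri_count : #|FCs es| = num_triangles es.
Proof. by rewrite -(card_in_imset (fU_inj hs)) (fU_im hs). Qed.

Lemma AZ : Aw (@wZ V es) = 2 * num_triangles es.
Proof.
rewrite /Aw pair_bigA -(pairs2 (@wZ_sym V es) (@wZ_irr V es)) -tri_count; congr (2 * _).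
apply: eq_card => p; rewrite !inE /wZ /fc_pair.
case: (ltnP p.1 p.2) => h /=.
  by rewrite {2}/future_closed ltnNge (ltnW h) /= orbF.
by rewrite /future_closed ltnNge h.
Qed.

Lemma AY : Aw (@wY V es) = 2 * num_wedges es.
Proof. by rewrite /Aw pair_bigA -(pairs2 (@wY_sym V es) (@wY_irr V es)). Qed.

Lemma bool_le (b c : bool) : (b -> c) -> (b : nat) <= c.
Proof. by case: b; case: c => // /(_ isT). Qed.

Lemma AZ_AY : Aw (@wZ V es) <= Aw (@wY V es).
Proof. by apply: leq_sum => a _; apply: leq_sum => b _; apply: bool_le; apply: wZ_wY. Qed.

Lemma DZ_DY : Dw (@wZ V es) <= Dw (@wY V es).
Proof.
apply: leq_sum => a _; rewrite leq_exp2r //.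
by apply: leq_sum => b _; apply: bool_le; apply: wZ_wY.
Qed.

Lemma AY_le : Aw (@wY V es) <= N ^ 2.
Proof.
apply: leq_trans (_ : \sum_(a : 'I_N) \sum_(b : 'I_N) 1 <= _).
  by apply: leq_sum => a _; apply: leq_sum => b _; case: (wY _ _).
rewrite (eq_bigr (fun _ => N)); last by move=> a _; rewrite sum_nat_const card_ord muln1.
by rewrite sum_nat_const card_ord mulnn.
Qed.

Lemma deg_bound (a : 'I_N) : (\sum_b (@wY V es a b : nat)) ^ 2 <= 8 * Aw (@wY V es).
Proof.
have [u [v [nuv eu]]] : exists u v : V, u != v /\ ea a = [set u; v] by apply/cards2P; rewrite (edge2 hs).
set A := Aw (@wY V es).
pose Bx x := [set b : 'I_N | @wY V es a b && (x \in ea b)].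
have dA : \sum_b (@wY V es a b : nat) <= A by rewrite /A /Aw [X in _ <= X](bigD1 a) //= leq_addr.
have dle : \sum_b (@wY V es a b : nat) <= #|Bx u| + #|Bx v|.
  rewrite sum_bool_card.
  apply: leq_trans (subset_leq_card (_ : _ \subset Bx u :|: Bx v)) _; last by rewrite cardsU leq_subr.
  apply/subsetP => b; rewrite !inE => hb; rewrite hb /=.
  move: (hb); rewrite /wY /is_wedge => /andP[_ /eqP h1].
  have : 0 < #|ea a :&: ea b| by rewrite h1.
  rewrite card_gt0 => /set0Pn[x]; rewrite inE eu !inE => /andP[/orP[] /eqP <- ->] //.
  by rewrite orbT.
have xd x : #|Bx x| <= A.
  apply: leq_trans dA; rewrite sum_bool_card; apply: subset_leq_card.
  by apply/subsetP => b; rewrite !inE => /andP[].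
have xb x : #|Bx x| * #|Bx x| <= A + #|Bx x|.
  set B := Bx x.
  have inner b : b \in B -> #|B| - 1 <= \sum_(c in B) (@wY V es b c : nat).
    move=> hb; rewrite (bigD1 b) //= wY_irr add0n.
    rewrite (eq_bigr (fun _ => 1)); last first.
      move=> c /andP[hc ncb]; move: hb hc; rewrite !inE => /andP[_ xb] /andP[_ xc].
      by rewrite /wY (share_wedge (edge2 hs b) (edge2 hs c) _ xb xc) // (eneq hs) // eq_sym.
    rewrite [#|B|](cardD1 b) hb add1n subSS -sum1_card.
    by rewrite subn0; apply: eq_leq; apply: eq_bigl => c; rewrite !inE andbC.
  have : \sum_(b in B) (#|B| - 1) <= A.
    apply: leq_trans (_ : \sum_(b in B) \sum_(c in B) (@wY V es b c : nat) <= _).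
      by apply: leq_sum => b hb; apply: inner.
    apply: leq_trans (leq_sum_in _ _) _; apply: leq_sum => b _; exact: leq_sum_in.
  rewrite sum_nat_const mulnBr muln1; lia.
have := xb u; have := xb v; have := xd u; have := xd v.
move: dle; set d := \sum_b _; set x := #|Bx u|; set y := #|Bx v| => h1 h2 h3 h4 h5.
have : d * d <= (x + y) * (x + y) by apply: leq_mul.
rewrite expnS expn1; nia.
Qed.

Definition Mw := \max_(a : 'I_N) \sum_b (@wY V es a b : nat).

Lemma M_bound : Mw ^ 2 <= 8 * Aw (@wY V es).
Proof.
rewrite /Mw; elim/big_ind: _ => //.
  by move=> m n hm hn; rewrite /maxn; case: ifP.
by move=> a _; apply: deg_bound.
Qed.

Lemma D_bound : Dw (@wY V es) <= Mw * Aw (@wY V es).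
Proof.
rewrite /Dw /Aw big_distrr /=; apply: leq_sum => a _.
by rewrite expnS expn1 leq_mul2r (@leq_bigmax _ (fun a => \sum_b (@wY V es a b : nat)) a) orbT.
Qed.

End Counts.
Set Implicit Arguments. Unset Strict Implicit. Unset Printing Implicit Defensive.
Local Open Scope R_scope.

Lemma INR_sum (I : Type) (s : seq I) (F : I -> nat) :
  INR (\sum_(x <- s) F x) = \big[Rplus/R0]_(x <- s) INR (F x).
Proof. by elim: s => [|x s IH]; rewrite ?big_nil ?big_cons // plus_INR IH. Qed.

Lemma sumsq (I : Type) (s : seq I) (f : I -> R) mu :
  \big[Rplus/R0]_(x <- s) ((f x - mu) * (f x - mu)) =
  \big[Rplus/R0]_(x <- s) (f x * f x) - 2 * mu * \big[Rplus/R0]_(x <- s) f x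
   + \big[Rplus/R0]_(x <- s) 1 * (mu * mu).
Proof. elim: s => [|x s IH]; rewrite ?big_nil ?big_cons /=; [lra | rewrite IH; ring]. Qed.

Lemma markov (I : Type) (s : seq I) (g : I -> R) (b : I -> bool) t2 :
  (forall x, 0 <= g x) -> (forall x, b x -> t2 <= g x) ->
  (\big[Rplus/R0]_(x <- s) INR (b x)) * t2 <= \big[Rplus/R0]_(x <- s) g x.
Proof.
move=> g0 gb; elim: s => [|x s IH]; rewrite ?big_nil ?big_cons /=; first lra.
case hb: (b x) => /=; last by have := g0 x; lra.
have := gb x hb; lra.
Qed.

Lemma Rleb_false x y : Rleb x y = false -> y < x.
Proof. by rewrite /Rleb; case: Rle_dec => // h _; lra. Qed.

Lemma cheb (T : finType) (X : T -> nat) (t : R) :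
  let K := INR #|T| in let mu := INR (\sum_x X x) / K in 0 < K -> 0 < t ->
  INR #|[set x | ~~ Rleb (Rabs (INR (X x) - mu)) t]| * (t * t) <=
  INR (\sum_x (X x * X x)%N) - K * (mu * mu).
Proof.
move=> K mu K0 t0.
have eK : K = \big[Rplus/R0]_(x : T) 1.
  by rewrite /K -sum1_card INR_sum.
have eX : INR (\sum_x X x) = K * mu by rewrite /mu; field; lra.
have e2 : INR (\sum_x (X x * X x)%N) = \big[Rplus/R0]_(x : T) (INR (X x) * INR (X x)).
  by rewrite INR_sum; apply: eq_bigr => x _; rewrite mult_INR.
rewrite -sum_bool_card INR_sum.
apply: Rle_trans (_ : _ <= \big[Rplus/R0]_(x : T) ((INR (X x) - mu) * (INR (X x) - mu))) _.
  apply: markov => x; first by apply: Rle_0_sqr.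
  move/negbTE/Rleb_false => h.
  have : t * t <= Rabs (INR (X x) - mu) * Rabs (INR (X x) - mu) by apply: Rmult_le_compat; lra.
  by rewrite -Rabs_mult Rabs_right //; apply: Rle_ge; apply: Rle_0_sqr.
rewrite sumsq -INR_sum -e2 -eK eX; lra.
Qed.

Lemma conc (T : finType) (X : T -> nat) (t bp : R) :
  let K := INR #|T| in let mu := INR (\sum_x X x) / K in 0 < K -> 0 < t ->
  INR (\sum_x (X x * X x)%N) / K - mu * mu < bp * (t * t) ->
  INR #|[set x | Rleb (Rabs (INR (X x) - mu)) t]| / K > 1 - bp.
Proof.
move=> K mu K0 t0 hv.
have := cheb X K0 t0; rewrite -/K -/mu => hc.
have hC := cardsC [set x | Rleb (Rabs (INR (X x) - mu)) t].
have eC : ~: [set x | Rleb (Rabs (INR (X x) - mu)) t] = [set x | ~~ Rleb (Rabs (INR (X x) - mu)) t].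
  by apply/setP => x; rewrite !inE.
rewrite eC in hC.
move: hC hc; set g := #|[set x | Rleb _ t]|; set b := #|[set x | ~~ Rleb _ t]| => hC hc.
have eK : K = INR g + INR b by rewrite /K -hC plus_INR.
have hv' : INR (\sum_x (X x * X x)%N) - K * (mu * mu) < bp * (t * t) * K.
  have := Rmult_lt_compat_r K _ _ K0 hv.
  have -> : (INR (\sum_x (X x * X x)%N) / K - mu * mu) * K = INR (\sum_x (X x * X x)%N) - K * (mu * mu) by field; lra.
  done.
have hb : INR b < bp * K.
  have tt0 : 0 < t * t by nra.
  apply: (Rmult_lt_reg_r (t * t)) => //; nra.
apply/Rlt_gt; apply: (Rmult_lt_reg_r K) => //.
have -> : INR g / K * K = INR g by field; lra.
nra.
Qed.
Local Open Scope R_scope.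

Lemma sq_le x y : 0 <= x -> 0 <= y -> y * y <= x * x -> y <= x.
Proof. move=> hx hy h; destruct (Rle_lt_dec y x) as [|h']; [done|nra]. Qed.

Lemma final_ineq (n S B u a M : R) :
  0 < B <= 1 -> 1 <= u -> 2 * (u * u) <= a -> a <= n * n -> M * M <= 8 * a -> 0 <= M -> 0 < n ->
  1000000 * n <= S * (B * u) ->
  2 * S * a + 2 * (n * n) + 4 * S * M * n < B / 125 * ((S - 1) * (S - 1)) * a.
Proof.
move=> hB hu hua han hM M0 n0 hS.
have un : u <= n by apply: sq_le; nra.
have SBc : 1000000 <= S * B by nra.
have Sc : 1000000 <= S by nra.
have a2 : 2 <= a by nra.
have hS1 : S * S / 2 <= (S - 1) * (S - 1) by nra.
have T1 : 2 * S * a <= B * (S * S) * a / 1000.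
  have : 0 <= (S * B - 2000) * (S * a) by apply: Rmult_le_pos; nra.
  nra.
have BSu : (1000000 * n) * (1000000 * n) <= (S * (B * u)) * (S * (B * u)) by nra.
have T2 : 2 * (n * n) <= B * (S * S) * a / 1000.
  have h1 : B * (S * S) * (2 * (u * u)) <= B * (S * S) * a.
    apply: Rmult_le_compat_l => //; nra.
  have h2 : (B * B) * (2 * (S * S) * (u * u)) <= B * (2 * (S * S) * (u * u)).
    apply: Rmult_le_compat_r; nra.
  nra.
have T3a : (4000 * M * n) * (4000 * M * n) <= (B * S * a) * (B * S * a).
  have h0 : 2 * ((1000000 * n) * (1000000 * n)) <= B * B * (S * S) * a.
    have h1 : (B * B * (S * S)) * (2 * (u * u)) <= (B * B * (S * S)) * a.
      apply: Rmult_le_compat_l => //; nra.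
    nra.
  have h1 : 2 * ((1000000 * n) * (1000000 * n)) * a <= (B * B * (S * S) * a) * a.
    apply: Rmult_le_compat_r; nra.
  have h2 : (M * M) * (n * n) <= (8 * a) * (n * n) by apply: Rmult_le_compat_r; nra.
  nra.
have T3 : 4000 * M * n <= B * S * a by apply: sq_le; nra.
have T3' : 4 * S * M * n <= B * (S * S) * a / 1000 by nra.
have R1 : B * (S * S) * a / 250 <= B / 125 * ((S - 1) * (S - 1)) * a by nra.
have pos : 0 < B * (S * S) * a by nra.
lra.
Qed.

Lemma S_ge (n S B u a : R) :
  0 < B <= 1 -> 1 <= u -> 2 * (u * u) <= a -> a <= n * n -> 0 < n ->
  1000000 * n <= S * (B * u) -> 1000000 <= S.
Proof.
move=> hB hu hua han n0 hS.
have un : u <= n by apply: sq_le; nra.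
have SBc : 1000000 <= S * B by nra.
nra.
Qed.

Lemma var_step n S S1 Ax a Dx M Q mu t bp :
  0 < n -> 1 <= S -> S1 = S - 1 -> 0 <= Ax -> Ax <= a -> 0 <= Dx -> Dx <= M * a -> 0 <= M -> 0 < a -> 0 < bp ->
  mu = S * S1 * (Ax / 2) / n ^ 2 -> t = bp * (S * S1 * (a / 2) / n ^ 2) ->
  Q * (4 * (n * n * (n * n))) <= S ^ 4 * (Ax * Ax) + 2 * S ^ 2 * (Ax * n ^ 2) + 4 * S ^ 3 * (Dx * n) ->
  2 * S * a + 2 * (n * n) + 4 * S * M * n < bp * bp * bp * (S1 * S1) * a ->
  Q - mu * mu < bp * (t * t).
Proof.
move=> n0 S1' -> A0 Aa D0 DM M0 a0 bp0 -> -> hQ hF.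
set D4 := 4 * (n * n * (n * n)).
have D40 : 0 < D4.
  rewrite /D4; have nn : 0 < n * n by nra.
  apply: Rmult_lt_0_compat; [lra | nra].
apply: (Rmult_lt_reg_r D4) => //.
have e1 : (S * (S - 1) * (Ax / 2) / n ^ 2) * (S * (S - 1) * (Ax / 2) / n ^ 2) * D4
   = (S * (S - 1) * Ax) * (S * (S - 1) * Ax) by rewrite /D4; field; lra.
have e2 : bp * ((bp * (S * (S - 1) * (a / 2) / n ^ 2)) * (bp * (S * (S - 1) * (a / 2) / n ^ 2))) * D4
   = bp * bp * bp * ((S * (S - 1) * a) * (S * (S - 1) * a)) by rewrite /D4; field; lra.
rewrite Rmult_minus_distr_r e1 e2.
have h1 : (S ^ 4 - (S * (S - 1)) * (S * (S - 1))) * (Ax * Ax) <= 2 * S ^ 3 * (a * a).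
  have : (S ^ 4 - (S * (S - 1)) * (S * (S - 1))) <= 2 * S ^ 3 by simpl; nra.
  have : Ax * Ax <= a * a by nra.
  have : 0 <= S ^ 4 - (S * (S - 1)) * (S * (S - 1)) by simpl; nra.
  have : 0 <= S ^ 3 by apply: pow_le; lra.
  nra.
have h2 : 2 * S ^ 2 * (Ax * n ^ 2) <= 2 * S ^ 2 * (a * n ^ 2).
  apply: Rmult_le_compat_l; first by have := pow_le S 2; lra.
  by apply: Rmult_le_compat_r => //; apply: pow_le; lra.
have h3 : 4 * S ^ 3 * (Dx * n) <= 4 * S ^ 3 * (M * a * n).
  apply: Rmult_le_compat_l; first by have := pow_le S 3; lra.
  by apply: Rmult_le_compat_r; lra.
have h4 : (S * S * a) * (2 * S * a + 2 * (n * n) + 4 * S * M * n) <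
          (S * S * a) * (bp * bp * bp * ((S - 1) * (S - 1)) * a).
  apply: Rmult_lt_compat_l; last exact: hF.
  have : 0 < S * S by nra.
  move=> h; apply: Rmult_lt_0_compat => //.
have h5 : S ^ 4 * (Ax * Ax) + 2 * S ^ 2 * (Ax * n ^ 2) + 4 * S ^ 3 * (Dx * n) - (S * (S - 1) * Ax) * (S * (S - 1) * Ax)
   <= (S * S * a) * (2 * S * a + 2 * (n * n) + 4 * S * M * n).
  have e3 : (S * S * a) * (2 * S * a + 2 * (n * n) + 4 * S * M * n) =
     2 * S ^ 3 * (a * a) + 2 * S ^ 2 * (a * n ^ 2) + 4 * S ^ 3 * (M * a * n) by ring.
  rewrite e3.
  have e4 : S ^ 4 * (Ax * Ax) - (S * (S - 1) * Ax) * (S * (S - 1) * Ax) = (S ^ 4 - (S * (S - 1)) * (S * (S - 1))) * (Ax * Ax) by ring.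
  lra.
have e5 : (S * S * a) * (bp * bp * bp * ((S - 1) * (S - 1)) * a) = bp * bp * bp * ((S * (S - 1) * a) * (S * (S - 1) * a)) by ring.
rewrite /D4; lra.
Qed.
Set Implicit Arguments. Unset Strict Implicit. Unset Printing Implicit Defensive.
Local Open Scope R_scope.

Lemma INR_expn a b : INR (a ^ b)%N = INR a ^ b.
Proof. by elim: b => [|b IH]; rewrite ?expn0 ?expnS ?mult_INR ?IH //=. Qed.

Lemma moments (N s : nat) (w : 'I_N -> 'I_N -> bool)
  (wsym : forall a b, w a b = w b a) (wirr : forall a, w a a = false)
  (X : {ffun 'I_s -> 'I_N} -> nat) (hX : forall r, (2 * X r)%N = X2 w r) :
  (0 < N)%N ->
  let K := INR #|{ffun 'I_s -> 'I_N}| in let n := INR N in let S := INR s in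
  let Ax := INR (Aw w) in let Dx := INR (Dw w) in
  0 < K /\
  INR (\sum_r X r) / K = S * INR (s - 1) * (Ax / 2) / n ^ 2 /\
  INR (\sum_r (X r * X r)%N) / K * (4 * (n * n * (n * n))) <=
    S ^ 4 * (Ax * Ax) + 2 * S ^ 2 * (Ax * n ^ 2) + 4 * S ^ 3 * (Dx * n).
Proof.
move=> N0 K n S Ax Dx.
have eK : K = n ^ s by rewrite /K card_ffun !card_ord INR_expn.
have n0 : 0 < n by apply: lt_0_INR; apply/ltP.
have K0 : 0 < K by rewrite eK; apply: pow_lt.
have sX : ((\sum_r X r) * 2 = \sum_(r : {ffun 'I_s -> 'I_N}) X2 w r)%N.
  by rewrite big_distrl /=; apply: eq_bigr => r _; rewrite mulnC hX.
have sX2 : ((\sum_r (X r * X r)) * 4 = \sum_(r : {ffun 'I_s -> 'I_N}) X2 w r ^ 2)%N.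
  rewrite big_distrl /=; apply: eq_bigr => r _; rewrite -hX; lia.
have hm := X2_mean s wirr; have hv := X2_var s wsym wirr.
rewrite -sX in hm; rewrite -sX2 in hv.
split=> //; split.
  have := f_equal INR hm; rewrite !mult_INR !INR_expn -subn1 -/K -eK -/n -/S -/Ax => e.
  apply: (Rmult_eq_reg_r (K * n ^ 2)); last by apply: Rmult_integral_contrapositive; split; apply: Rgt_not_eq => //; apply: pow_lt.
  have i2 : INR 2 = 2 by rewrite /=; lra.
  rewrite i2 in e.
  have -> : INR (\sum_r X r) / K * (K * n ^ 2) = INR (\sum_r X r) * 2 * (n * n) / 2 by field; lra.
  rewrite e; field; lra.
have := le_INR _ _ (leP hv); rewrite !mult_INR !plus_INR !mult_INR !INR_expn -/K -eK -/n -/S -/Ax -/Dx => e.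
have i2 : INR 2 = 2 by rewrite /=; lra.
have i4 : INR 4 = 4 by rewrite /=; lra.
rewrite i2 i4 in e.
apply: (Rmult_le_reg_r K) => //.
have -> : INR (\sum_r (X r * X r)%N) / K * (4 * (n * n * (n * n))) * K =
   INR (\sum_r (X r * X r)%N) * 4 * (n * (n * (n * n))) by field; lra.
by apply: (Rle_trans _ _ _ e); apply: Req_le; ring.
Qed.

Theorem mainTheorem8 :
  exists c : R,
  forall (V : finType) (es : seq {set V}) (beta : R) (s : nat),
    simple_stream es ->
    (size es <= num_wedges es)%N ->
    (1 <= num_triangles es)%N ->
    0 < beta < 1 ->
    INR s >= c * INR (size es) / (beta ^ 3 * sqrt (INR (num_triangles es))) ->
    let beta' := beta / 5 in
    let m := INR (size es) in
    let W := INR (num_wedges es) in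
    let T := INR (num_triangles es) in
    let EY := expect (@Ycount V es s) in
    let EZ := expect (@Zcount V es s) in
    EY = INR s * INR (s - 1) * W / m ^ 2 /\
    prob (fun r : sample es s => Rleb (Rabs (INR (Ycount r) - EY)) (beta' * EY)) > 1 - beta' /\
    EZ = INR s * INR (s - 1) * T / m ^ 2 /\
    prob (fun r : sample es s => Rleb (Rabs (INR (Zcount r) - EZ)) ((beta' * W / T) * EZ))
      > 1 - beta'.
Proof.
exists 1000000.
move=> V es beta s hs hNW hT hb hsc beta' m W T EY EZ.
have hAY := AY es. have hAZ := AZ hs. have hAZY := AZ_AY hs. have hDZY := DZ_DY hs.
have hAle := AY_le es. have hM := M_bound hs. have hD := D_bound es.
have N0 : (0 < size es)%N.
  have : (0 < size es ^ 2)%N by lia.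
  by rewrite expn_gt0 orbF.
have hYc (r : sample es s) : (2 * Ycount r)%N = X2 (@wY V es) r.
  exact: (@pairs2 s (fun i j => @wY V es (r i) (r j)) (fun a b => wY_sym _ _) (fun a => wY_irr _)).
have hZc (r : sample es s) : (2 * Zcount r)%N = X2 (@wZ V es) r.
  exact: (@pairs2 s (fun i j => @wZ V es (r i) (r j)) (fun a b => wZ_sym _ _) (fun a => wZ_irr _)).
have [K0 [mY vY]] := moments (@wY_sym V es) (@wY_irr V es) hYc N0.
have [_ [mZ vZ]] := moments (@wZ_sym V es) (@wZ_irr V es) hZc N0.
have hTW : (num_triangles es <= num_wedges es)%N by lia.
set A := Aw (@wY V es) in hAY hAZY hAle hM hD mY vY.
set AZ := Aw (@wZ V es) in hAZ hAZY mZ vZ.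
set DY := Dw (@wY V es) in hDZY hD vY.
set DZ := Dw (@wZ V es) in hDZY vZ.
set Mn := Mw es in hM hD.
set S := INR s.
have n0 : 0 < m by apply: lt_0_INR; apply/ltP.
have rA : INR A = 2 * W by rewrite hAY mult_INR.
have rAZ : INR AZ = 2 * T by rewrite hAZ mult_INR.
have rAle : INR A <= m * m by have := le_INR _ _ (leP hAle); rewrite INR_expn /= Rmult_1_r.
have rM : INR Mn * INR Mn <= 8 * INR A.
  have h := le_INR _ _ (leP hM); rewrite INR_expn mult_INR in h.
  have i8 : INR 8 = 8 by rewrite /=; lra.
  rewrite i8 /= in h; lra.
have rD : INR DY <= INR Mn * INR A by have := le_INR _ _ (leP hD); rewrite mult_INR.
have rDZ : INR DZ <= INR DY by apply: le_INR; apply/leP.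
have rAZY : INR AZ <= INR A by apply: le_INR; apply/leP.
have T1 : 1 <= T by rewrite /T; have := le_INR _ _ (leP hT).
have TW : T <= W by apply: le_INR; apply/leP.
set u := sqrt T.
have uu : u * u = T by rewrite /u sqrt_sqrt //; lra.
have u1 : 1 <= u by rewrite /u -sqrt_1; apply: sqrt_le_1_alt.
set B := beta ^ 3.
have hB : 0 < B <= 1.
  rewrite /B; split; first by apply: pow_lt; lra.
  by rewrite -(pow1 3); apply: pow_incr; lra.
have hS' : 1000000 * m <= S * (B * u).
  have Bu : 0 < B * u by nra.
  move: hsc; rewrite -/S -/m -/T -/u -/B => hsc.
  have : 1000000 * m / (B * u) <= S by lra.
  move=> h; have := Rmult_le_compat_r (B * u) _ _ (Rlt_le _ _ Bu) h.
  have -> : 1000000 * m / (B * u) * (B * u) = 1000000 * m by field; lra.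
  lra.
have a2 : 2 * (u * u) <= INR A by rewrite uu rA; lra.
have M0 : 0 <= INR Mn by apply: pos_INR.
have Sge := @S_ge _ _ _ _ _ hB u1 a2 rAle n0 hS'.
have hF := @final_ineq _ _ _ _ _ _ hB u1 a2 rAle rM M0 n0 hS'.
have s1 : (1 <= s)%N by apply/leP; apply: INR_le; rewrite /= -/S; lra.
have S1 : INR (s - 1) = S - 1 by rewrite minus_INR //; apply/leP.
have hF' : 2 * S * INR A + 2 * (m * m) + 4 * S * INR Mn * m < beta' * beta' * beta' * (INR (s - 1) * INR (s - 1)) * INR A.
  have -> : beta' * beta' * beta' = B / 125 by rewrite /beta' /B /=; field.
  by rewrite S1.
have a0 : 0 < INR A by lra.
have bp0 : 0 < beta' by rewrite /beta'; lra.
have eEY : EY = S * INR (s - 1) * (INR A / 2) / m ^ 2 := mY.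
have eEZ : EZ = S * INR (s - 1) * (INR AZ / 2) / m ^ 2 := mZ.
have EYpos : 0 < EY.
  rewrite eEY S1; apply: Rmult_lt_0_compat; last by apply: Rinv_0_lt_compat; apply: pow_lt.
  apply: Rmult_lt_0_compat; [nra | lra].
split; first by rewrite eEY rA; field; lra.
split.
  have hc := @conc (sample es s) (@Ycount V es s) (beta' * EY) beta'.
  apply: hc => //; first by nra.
  apply: (@var_step m S (INR (s - 1)) (INR A) (INR A) (INR DY) (INR Mn)) => //.
  - lra.
  - by apply: pos_INR.
  - lra.
  - by apply: pos_INR.
  - by rewrite eEY.
split; first by rewrite eEZ rAZ; field; lra.
have hc := @conc (sample es s) (@Zcount V es s) ((beta' * W / T) * EZ) beta'.
have ZT : beta' * W / T * EZ = beta' * (S * INR (s - 1) * (INR A / 2) / m ^ 2).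
  by rewrite eEZ rAZ rA; field; lra.
apply: hc => //; first by rewrite ZT; nra.
rewrite ZT.
apply: (@var_step m S (INR (s - 1)) (INR AZ) (INR A) (INR DZ) (INR Mn)) => //.
- lra.
- by apply: pos_INR.
- by apply: pos_INR.
- lra.
Qed.
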